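(* Let $\underline{L}$ be a finite lattice and $\underline{S}=[u,v]$ an interval of $\underline{L}$. If $\underline{S}$ is dismantling for $\underline{L}$, then $\underline{L}\setminus\underline{S}$ is a complete sublattice of $\underline{L}$ (i.e. $L\setminus S$ is closed under arbitrary joins and meets taken in $\underline{L}$, including the empty ones, so it contains the top and bottom of $\underline{L}$).
   Context: For $u\le v$ in a lattice $L$, $[u,v]=\{x\mid u\le x\le v\}$, $(v]=\{x\mid x\le v\}$, $[u)=\{x\mid u\le x\}$. An interval $[u,v]$ of $L$ is quasi-dismantling for $L$ if $u$ is supremum-prime in $(v]$ (for all $x,y\in(v]$, $u\le x\vee y$ implies $u\le x$ or $u\le y$) and $v$ is infimum-prime in $[u)$ (for all $x,y\in[u)$, $x\wedge y\le v$ implies $x\le v$ or $y\le v$). It is dismantling for $L$ if moreover $u\neq\bot$ and $v\neq\top$, where $\bot,\top$ are the least and greatest elements of $L$. *)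

(* Defs.v *)
From mathcomp Require Import all_boot all_order.
Set Implicit Arguments. Unset Strict Implicit. Unset Printing Implicit Defensive.
Import Order.TTheory.
Local Open Scope order_scope.

(* A finite lattice is modelled as a finTBLatticeType (finite, nonempty
   lattice; such a lattice automatically has \bot and \top). *)

Definition in_itv {d} {L : finTBLatticeType d} (u v x : L) : bool :=
  (u <= x) && (x <= v).

Definition sup_prime_below {d} {L : finTBLatticeType d} (u v : L) : Prop :=
  forall x y : L, x <= v -> y <= v -> u <= x `|` y -> (u <= x) || (u <= y).

Definition inf_prime_above {d} {L : finTBLatticeType d} (u v : L) : Prop :=
  forall x y : L, u <= x -> u <= y -> x `&` y <= v -> (x <= v) || (y <= v).

Definition quasi_dismantling {d} {L : finTBLatticeType d} (u v : L) : Prop :=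
  u <= v /\ sup_prime_below u v /\ inf_prime_above u v.

Definition dismantling {d} {L : finTBLatticeType d} (u v : L) : Prop :=
  quasi_dismantling u v /\ u != \bot /\ v != \top.

(* Main.v *)
Require Import Defs.
From mathcomp Require Import all_boot all_order.
Import Order.TTheory.
Local Open Scope order_scope.

Theorem corollary1 (d : Order.disp_t) (L : finTBLatticeType d) (u v : L) :
  dismantling u v ->
  forall X : {set L},
    (forall x, x \in X -> ~~ in_itv u v x) ->
    ~~ in_itv u v (\join_(x in X) x) /\ ~~ in_itv u v (\meet_(x in X) x).
Proof.
move=> [[uv [sp ip]] [ub vt]] X HX; split; rewrite /in_itv negb_and.
- have: (\join_(x in X) x <= v) ==> ~~ (u <= \join_(x in X) x).
    apply: (big_ind (fun y => (y <= v) ==> ~~ (u <= y))).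
    + apply/implyP => _; rewrite le_eqVlt negb_or ub /= ltx0 //.
    + move=> x y /implyP Hx /implyP Hy; apply/implyP.
      rewrite leUx => /andP [xv yv]; apply/negP => /(sp _ _ xv yv).
      by case/orP; apply/negP; [exact: Hx | exact: Hy].
    + by move=> x /HX; rewrite /in_itv; case: (u <= x); case: (x <= v).
  by case: (u <= _); case: (_ <= v).
- have: (u <= \meet_(x in X) x) ==> ~~ (\meet_(x in X) x <= v).
    apply: (big_ind (fun y => (u <= y) ==> ~~ (y <= v))).
    + apply/implyP => _; rewrite le_eqVlt negb_or eq_sym vt /= lt1x //.
    + move=> x y /implyP Hx /implyP Hy; apply/implyP.
      rewrite lexI => /andP [xv yv]; apply/negP => /(ip _ _ xv yv).
      by case/orP; apply/negP; [exact: Hx | exact: Hy].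
    + by move=> x /HX; rewrite /in_itv; case: (u <= x); case: (x <= v).
  by case: (u <= _); case: (_ <= v).
Qed.
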